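(* Let $d:\mathcal X\times\hat{\mathcal X}\to[0,\infty)$ be a distortion function such that the matrix $[e^{-s_1d(i,j)}]_{(i,j)\in\mathcal X\times\hat{\mathcal X}}$ is full rank. Then every eigenvalue of $M$ is strictly positive, where $$M_{ij}=q^*(i)\sum_xp(x)\frac{A(x,i)A(x,j)}{\big(\sum_kq^*(k)A(x,k)\big)^2}.$$
   Context: Finite alphabets $\mathcal X=\hat{\mathcal X}$, source distribution $p$, and multipliers $s_1,s_2\ge0$. $f:(0,\infty)\to\mathbb R$ is convex with $f(1)=0$ and twice differentiable, and $D_f(p\|q)=\sum_xq(x)f(p(x)/q(x))$. $q^*$ is a fixed point achieving the rate-distortion-perception function of the implicitly defined map $$S[q](i)=q(i)\sum_xp(x)\frac{A_q(x,i)}{\sum_kq(k)A_q(x,k)},\qquad A_q(x,i)=\exp\{-s_1d(x,i)-s_2[f(p(i)/S[q](i))-\tfrac{p(i)}{S[q](i)}f'(p(i)/S[q](i))]\},$$ and $A=A_{q^*}$. *)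

(* Defs.v *)
From HB Require Import structures.
From mathcomp Require Import all_boot all_order all_algebra.
From mathcomp Require Import all_classical all_reals all_analysis.
From mathcomp Require Import complex.
Set Implicit Arguments. Unset Strict Implicit. Unset Printing Implicit Defensive.
Import Order.TTheory GRing.Theory Num.Theory.
Local Open Scope ring_scope.

(* Alphabets X = Xhat = 'I_n.  Distributions are functions 'I_n -> R. *)

(* A_q(x,i) evaluated at a fixed point, where S[q] = q, i.e. with
   p(i)/S[q](i) replaced by p(i)/q(i). *)
Definition Afix (R : realType) (n : nat) (s1 s2 : R) (d : 'I_n -> 'I_n -> R)
  (f : R -> R) (p q : 'I_n -> R) (x i : 'I_n) : R :=
  expR (- (s1 * d x i)
        - s2 * (f (p i / q i) - p i / q i * derive1 f (p i / q i))).

Definition Sfix (R : realType) (n : nat) (s1 s2 : R) (d : 'I_n -> 'I_n -> R)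
  (f : R -> R) (p q : 'I_n -> R) (i : 'I_n) : R :=
  q i * \sum_(x < n) p x * Afix s1 s2 d f p q x i
          / \sum_(k < n) q k * Afix s1 s2 d f p q x k.

Definition Mmat (R : realType) (n : nat) (s1 s2 : R) (d : 'I_n -> 'I_n -> R)
  (f : R -> R) (p q : 'I_n -> R) : 'M[R]_n :=
  \matrix_(i < n, j < n)
    (q i * \sum_(x < n) p x * (Afix s1 s2 d f p q x i * Afix s1 s2 d f p q x j)
             / (\sum_(k < n) q k * Afix s1 s2 d f p q x k) ^+ 2).

Definition convex_pos (R : realType) (f : R -> R) : Prop :=
  forall x y t : R, 0 < x -> 0 < y -> 0 <= t <= 1 ->
    f (t * x + (1 - t) * y) <= t * f x + (1 - t) * f y.

Definition twice_diff_pos (R : realType) (f : R -> R) : Prop :=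
  forall x : R, 0 < x -> derivable f x 1 /\ derivable (derive1 f) x 1.

(* Main.v *)
Require Import Defs.
From HB Require Import structures.
From mathcomp Require Import all_boot all_order all_algebra.
From mathcomp Require Import all_classical all_reals all_analysis.
From mathcomp Require Import complex.
From mathcomp Require Import ring.
Import Order.TTheory GRing.Theory Num.Theory.
Local Open Scope ring_scope.
Local Open Scope complex_scope.

Lemma mulcJ_gt0 (R : rcfType) (x : R[i]) : x != 0 -> 0 < x * conjc x.
Proof.
case: x => a b H; rewrite ltcE /=; apply/andP; split.
  by apply/eqP; ring.
have : (a != 0) || (b != 0).
  apply: contraR H; rewrite negb_or !negbK => /andP[/eqP -> /eqP ->]; by [].
have h1 : 0 <= a * a by rewrite -expr2 sqr_ge0.
have h2 : 0 <= b * b by rewrite -expr2 sqr_ge0.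
rewrite ?opprK mulrN opprK.
case/orP => nz.
  have : 0 < a * a by rewrite -expr2 exprn_even_gt0.
  by move=> ha; apply: (lt_le_trans ha); rewrite lerDl.
have : 0 < b * b by rewrite -expr2 exprn_even_gt0.
by move=> hb; apply: (lt_le_trans hb); rewrite lerDr.
Qed.

Lemma conjcM (R : rcfType) (x y : R[i]) : conjc (x * y) = conjc x * conjc y.
Proof. exact: rmorphM. Qed.

Lemma conjc_sum (R : rcfType) (n : nat) (G : 'I_n -> R[i]) :
  conjc (\sum_(i < n) G i) = \sum_(i < n) conjc (G i).
Proof. exact: rmorph_sum. Qed.

Lemma mulcJ_ge0' (R : rcfType) (x : R[i]) : 0 <= x * conjc x.
Proof. exact: mulcJ_ge0. Qed.

Lemma sum_gt0_one (F : numDomainType) (n : nat) (G : 'I_n -> F) (k : 'I_n) :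
  (forall i, 0 <= G i) -> 0 < G k -> 0 < \sum_(i < n) G i.
Proof.
move=> H Hk; rewrite (bigD1 k) //=; apply: (lt_le_trans Hk).
by rewrite lerDl sumr_ge0.
Qed.

Lemma core (R : realType) (n : nat) (p q : 'I_n -> R)
  (a e : 'I_n -> 'I_n -> R) (h : 'I_n -> R) :
  (forall x, 0 < p x) -> (forall i, 0 < q i) ->
  (forall x i, a x i = e x i * h i) -> (forall i, 0 < h i) ->
  (forall x i, 0 < a x i) ->
  \rank (\matrix_(i < n, j < n) e i j) = n ->
  forall lambda : R[i],
    eigenvalue (map_mx (fun r : R => r%:C) (\matrix_(i < n, j < n)
    (q i * \sum_(x < n) p x * (a x i * a x j)
             / (\sum_(k < n) q k * a x k) ^+ 2))) lambda ->
    0 < lambda.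
Proof.
move=> pP qP aE hP aP rkE lambda /eigenvalueP [v Hv vnz].
pose Z x := \sum_(k < n) q k * a x k.
pose c x := p x / Z x ^+ 2.
have ZP x : 0 < Z x.
  apply: (@sum_gt0_one _ _ _ x) => [i|]; last by rewrite mulr_gt0.
  by rewrite mulr_ge0 // ltW.
have cP x : 0 < c x by rewrite divr_gt0 // exprn_gt0.
pose M := \matrix_(i < n, j < n)
    (q i * \sum_(x < n) p x * (a x i * a x j)
             / (\sum_(k < n) q k * a x k) ^+ 2).
have Mij i j : M i j = q i * \sum_(x < n) c x * a x i * a x j.
  rewrite mxE; congr (_ * _); apply: eq_bigr => x _.
  by rewrite /c /Z; ring.
have Hj j : \sum_(i < n) v 0 i * (M i j)%:C = lambda * v 0 j.
  move/rowP: (Hv) => /(_ j); rewrite !mxE => <-.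
  by apply: eq_bigr => i _; rewrite /M !mxE.
pose w i := v 0 i * (q i)%:C.
pose u x := \sum_(i < n) w i * (a x i)%:C.
pose S := \sum_(x < n) (c x)%:C * (u x * conjc (u x)).
pose T := \sum_(j < n) (q j)%:C * (v 0 j * conjc (v 0 j)).
pose F x i j := (c x)%:C * (w i * (a x i)%:C) * (conjc (w j) * (a x j)%:C).
have key : lambda * T = S.
  transitivity (\sum_(j < n) (\sum_(i < n) v 0 i * (M i j)%:C) * conjc (w j)).
    rewrite mulr_sumr; apply: eq_bigr => j _; rewrite Hj /w conjcM conjc_real.
    ring.
  transitivity (\sum_(j < n) \sum_(i < n) \sum_(x < n) F x i j).
    apply: eq_bigr => j _; rewrite mulr_suml; apply: eq_bigr => i _.
    rewrite Mij rmorphM rmorph_sum !mulr_sumr mulr_suml; apply: eq_bigr => x _.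
    rewrite /F /w !conjcM !conjc_real; ring.
  transitivity (\sum_(i < n) \sum_(j < n) \sum_(x < n) F x i j).
    exact: exchange_big.
  transitivity (\sum_(i < n) \sum_(x < n) \sum_(j < n) F x i j).
    by apply: eq_bigr => i _; exact: exchange_big.
  transitivity (\sum_(x < n) \sum_(i < n) \sum_(j < n) F x i j).
    exact: exchange_big.
  apply: eq_bigr => x _; rewrite /u conjc_sum mulr_suml mulr_sumr.
  apply: eq_bigr => i _; rewrite !mulr_sumr; apply: eq_bigr => j _.
  rewrite /F !conjcM !conjc_real; ring.
have [k vk] : exists k, v 0 k != 0.
  case: (pickP (fun k => v 0 k != 0)) => [k vk | H]; first by exists k.
  by case/negP: vnz; apply/eqP/rowP => k; rewrite mxE; apply/eqP; have := H k; move/negbFE.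
have qCP i : 0 < (q i)%:C by rewrite ltcE /= eqxx qP.
have TP : 0 < T.
  apply: (@sum_gt0_one _ _ _ k) => [i|]; last by rewrite mulr_gt0 // mulcJ_gt0.
  by apply: mulr_ge0; [exact: ltW | exact: mulcJ_ge0'].
have [x ux] : exists x, u x != 0.
  case: (pickP (fun x => u x != 0)) => [x ux | H]; first by exists x.
  exfalso.
  pose Fc := map_mx (real_complex R) (\matrix_(i < n, j < n) e i j).
  pose y : 'rV[R[i]]_n := \row_i (w i * (h i)%:C).
  have y0 : y *m Fc^T = 0 *m Fc^T.
    rewrite mul0mx; apply/rowP => x; rewrite !mxE.
    apply: (@eq_trans _ _ (u x)); last by apply/eqP; move/negbFE: (H x).
    rewrite /u; apply: eq_bigr => i _; rewrite !mxE aE rmorphM; ring.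
  have rf : row_free Fc^T by rewrite /row_free mxrank_tr mxrank_map rkE.
  move/rowP: (row_free_inj rf y0) => /(_ k); rewrite !mxE /w.
  move/eqP; rewrite !mulf_eq0 (negbTE vk) /=.
  by rewrite (gt_eqF (qCP k)) /= (gt_eqF (_ : 0 < (h k)%:C)) // ltcE /= eqxx hP.
have SP : 0 < S.
  apply: (@sum_gt0_one _ _ _ x) => [i|]; last first.
    by rewrite mulr_gt0 ?mulcJ_gt0 // ltcE /= eqxx cP.
  apply: mulr_ge0; last exact: mulcJ_ge0'.
  by apply: ltW; rewrite ltcE /= eqxx cP.
have Tn : T != 0 by rewrite gt_eqF.
by rewrite -(mulfK Tn lambda) key divr_gt0.
Qed.

Theorem lemma4 (R : realType) (n : nat) (s1 s2 : R)
  (d : 'I_n -> 'I_n -> R) (f : R -> R) (p q : 'I_n -> R) :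
  0 <= s1 -> 0 <= s2 ->
  (* source distribution p, with full support (needed for f(p(i)/q(i))) *)
  (forall x, 0 < p x) -> \sum_(x < n) p x = 1 ->
  (* q* is a distribution with full support, fixed point of S *)
  (forall i, 0 < q i) -> \sum_(i < n) q i = 1 ->
  (forall i, Sfix s1 s2 d f p q i = q i) ->
  (* f convex on (0,oo), f(1) = 0, twice differentiable *)
  convex_pos f -> f 1 = 0 -> twice_diff_pos f ->
  (* distortion function *)
  (forall x y, 0 <= d x y) ->
  \rank (\matrix_(i < n, j < n) expR (- (s1 * d i j))) = n ->
  forall lambda : R[i],
    eigenvalue (map_mx (fun r : R => r%:C) (Mmat s1 s2 d f p q)) lambda ->
    0 < lambda.
Proof.
move=> _ _ pP _ qP _ _ _ _ _ _ rkE lambda.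
pose G i := f (p i / q i) - p i / q i * derive1 f (p i / q i).
apply: (@core R n p q (Afix s1 s2 d f p q) (fun x i => expR (- (s1 * d x i)))
         (fun i => expR (- (s2 * G i)))) => //.
- by move=> x i; rewrite /Afix -expRD.
- by move=> i; rewrite expR_gt0.
- by move=> x i; rewrite /Afix expR_gt0.
Qed.
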